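(* Let $S_1, S_2$ be triangle meshes with $n_1$ and $n_2$ vertices, and for $i=1,2$ let $\Phi_i \in \mathbb{R}^{n_i \times k}$ be the matrix of the first $k$ eigenfunctions of the cotangent Laplace–Beltrami operator of $S_i$, normalized so that $\Phi_i^T A_i \Phi_i = \mathbb{I}$, where $A_i$ is the area (mass) matrix of $S_i$. Put $\Phi_i^{\dagger} = \Phi_i^T A_i$. Let $F_1 \in \mathbb{R}^{n_1\times p}$ and $F_2 \in \mathbb{R}^{n_2 \times p}$ be feature matrices produced by a feature extractor that is complete, i.e. $F_i = \Phi_i \Phi_i^{\dagger} F_i$ for $i=1,2$. Let $\mathbf{A}_1 = \Phi_1^{\dagger} F_1$, $\mathbf{A}_2 = \Phi_2^{\dagger} F_2$, and $\mathbf{C}_{\rm opt} = \arg\min_{\mathbf{C}\in\mathbb{R}^{k\times k}} \|\mathbf{C}\mathbf{A}_1 - \mathbf{A}_2\|_F$. Assume that all optimization problems below have unique global minimizers (in particular $\mathbf{A}_1$ has full rank, and in problems of the form $\arg\min_{\Pi}\|\Pi G_1 - G_2\|$ the rows of $G_1$ are pairwise distinct). Then: (1) If $\Pi F_1 = F_2$ for some point-to-point map matrix $\Pi \in \{0,1\}^{n_2\times n_1}$, then $\mathbf{C}_{12} = \Phi_2^{\dagger}\Pi\Phi_1$ is basis-aligning; moreover $\mathbf{C}_{12} = \mathbf{C}_{\rm opt}$, and the point-to-point map obtained from $\mathbf{C}_{\rm opt}$ by the adjoint method, $\arg\min_{\Pi'} \|\Pi'\Phi_1 - \Phi_2 \mathbf{C}_{\rm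 opt}\|$, coincides with the one obtained by nearest-neighbour search in feature space, $\arg\min_{\Pi'}\|\Pi' F_1 - F_2\|$. (2) Conversely, if $F_1, F_2$ are complete and $\mathbf{C}_{\rm opt}$ is basis-aligning, then $\arg\min_{\Pi}\|\Pi F_1 - F_2\| = \arg\min_{\Pi}\|\Pi\Phi_1 - \Phi_2 \mathbf{C}_{\rm opt}\|$. Here all minimizations over $\Pi$ range over point-to-point map matrices $\Pi\in\{0,1\}^{n_2\times n_1}$.
   Context: A point-to-point map from the vertices of $S_2$ to the vertices of $S_1$ is encoded as a matrix $\Pi \in \{0,1\}^{n_2 \times n_1}$ with exactly one entry equal to $1$ in each row ($\Pi(i,j)=1$ iff vertex $i$ of $S_2$ is mapped to vertex $j$ of $S_1$). Norms $\|\cdot\|$ are Frobenius norms. A functional map $\mathbf{C}_{12}\in\mathbb{R}^{k\times k}$ is called basis-aligning if there exists a point-to-point map matrix $\Pi_{21}\in\{0,1\}^{n_2\times n_1}$ such that $\Phi_2 \mathbf{C}_{12} = \Pi_{21}\Phi_1$. The ''adjoint method'' converts a functional map $\mathbf{C}_{12}$ into a point-to-point map by solving $\arg\min_{\Pi}\|\Pi\Phi_1 - \Phi_2\mathbf{C}_{12}\|$, i.e. nearest-neighbour search between rows of $\Phi_1$ and rows of $\Phi_2\mathbf{C}_{12}$. *)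

(* Defs.v *)
From mathcomp Require Import all_boot all_order all_algebra.
Set Implicit Arguments. Unset Strict Implicit. Unset Printing Implicit Defensive.
Import Order.TTheory GRing.Theory Num.Theory.
Local Open Scope ring_scope.

Definition frob (R : rcfType) (m n : nat) (M : 'M[R]_(m, n)) : R :=
  Num.sqrt (\sum_(i < m) \sum_(j < n) M i j ^+ 2).

Definition is_p2p (R : rcfType) (n2 n1 : nat) (P : 'M[R]_(n2, n1)) : Prop :=
  (forall i j, P i j = 0 \/ P i j = 1) /\
  (forall i, exists! j, P i j = 1).

Definition is_argmin (T : Type) (R : rcfType) (D : T -> Prop) (f : T -> R) (x : T) : Prop :=
  D x /\ forall y, D y -> f x <= f y.

Definition unique_argmin (T : Type) (R : rcfType) (D : T -> Prop) (f : T -> R) : Prop :=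
  exists x, is_argmin D f x /\ forall y, is_argmin D f y -> y = x.

Definition pinvA (R : rcfType) (n k : nat) (Phi : 'M[R]_(n, k)) (A : 'M[R]_n) : 'M[R]_(k, n) :=
  Phi^T *m A.

Definition complete (R : rcfType) (n k p : nat) (Phi : 'M[R]_(n, k)) (A : 'M[R]_n)
  (F : 'M[R]_(n, p)) : Prop :=
  F = Phi *m (pinvA Phi A *m F).

Definition basis_aligning (R : rcfType) (n1 n2 k : nat)
  (Phi1 : 'M[R]_(n1, k)) (Phi2 : 'M[R]_(n2, k)) (C : 'M[R]_k) : Prop :=
  exists P : 'M[R]_(n2, n1), is_p2p P /\ Phi2 *m C = P *m Phi1.

Definition spd (R : rcfType) (n : nat) (A : 'M[R]_n) : Prop :=
  A^T = A /\ forall v : 'cV[R]_n, v != 0 -> 0 < (v^T *m A *m v) 0 0.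

(* Main.v *)
Require Import Defs.
From mathcomp Require Import all_boot all_order all_algebra.
From mathcomp Require Import ring lra.
Import Order.TTheory GRing.Theory Num.Theory.
Set Implicit Arguments. Unset Strict Implicit.
Local Open Scope ring_scope.

Definition ip (R : rcfType) m n (U V : 'M[R]_(m,n)) : R := \tr (U *m V^T).

Lemma ipE (R : rcfType) m n (U V : 'M[R]_(m,n)) :
  ip U V = \sum_(i < m) \sum_(j < n) U i j * V i j.
Proof.
rewrite /ip /mxtrace; apply: eq_bigr => i _; rewrite !mxE.
apply: eq_bigr => j _; by rewrite mxE.
Qed.

Lemma frobE (R : rcfType) m n (U : 'M[R]_(m,n)) : frob U = Num.sqrt (ip U U).
Proof.
by rewrite /frob ipE.
Qed.

Lemma ip_ge0 (R : rcfType) m n (U : 'M[R]_(m,n)) : 0 <= ip U U.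
Proof.
rewrite ipE; apply: sumr_ge0 => i _; apply: sumr_ge0 => j _.
by rewrite -expr2 sqr_ge0.
Qed.

Lemma msq (R : rcfType) (x : R) : 0 <= x * x.
Proof. by rewrite -expr2 sqr_ge0. Qed.

Lemma ip_eq0 (R : rcfType) m n (U : 'M[R]_(m,n)) : ip U U = 0 -> U = 0.
Proof.
rewrite ipE => H; apply/matrixP => i j; rewrite mxE.
have Hi : \sum_(j < n) U i j * U i j = 0.
  by apply: (psumr_eq0P _ H) => // k _; apply: sumr_ge0 => l _; apply: msq.
have Hj : U i j * U i j = 0.
  by apply: (psumr_eq0P _ Hi) => // k _; apply: msq.
by move/eqP: Hj; rewrite mulf_eq0 orbb => /eqP.
Qed.

Lemma frob_le (R : rcfType) m n (U V : 'M[R]_(m,n)) :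
  (frob U <= frob V) = (ip U U <= ip V V).
Proof. by rewrite !frobE ler_sqrt // ip_ge0. Qed.

Lemma frob0 (R : rcfType) m n : frob (0 : 'M[R]_(m,n)) = 0.
Proof.
rewrite frobE ipE (eq_bigr (fun _ => 0)) ?big1 ?sqrtr0 // => i _.
by rewrite big1 // => j _; rewrite mxE mul0r.
Qed.

Lemma frob_ge0 (R : rcfType) m n (U : 'M[R]_(m,n)) : 0 <= frob U.
Proof. by rewrite frobE sqrtr_ge0. Qed.

Lemma ipDl (R : rcfType) m n (U V W : 'M[R]_(m,n)) : ip (U + V) W = ip U W + ip V W.
Proof. by rewrite /ip mulmxDl mxtraceD. Qed.
Lemma ipDr (R : rcfType) m n (U V W : 'M[R]_(m,n)) : ip W (U + V) = ip W U + ip W V.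
Proof. by rewrite /ip linearD /= mulmxDr mxtraceD. Qed.
Lemma ipC (R : rcfType) m n (U V : 'M[R]_(m,n)) : ip U V = ip V U.
Proof. by rewrite /ip -mxtrace_tr trmx_mul trmxK. Qed.
Lemma ipZl (R : rcfType) m n t (U V : 'M[R]_(m,n)) : ip (t *: U) V = t * ip U V.
Proof. by rewrite /ip -scalemxAl mxtraceZ. Qed.
Lemma ipZr (R : rcfType) m n t (U V : 'M[R]_(m,n)) : ip U (t *: V) = t * ip U V.
Proof. by rewrite ipC ipZl ipC. Qed.

Lemma uniq_iff (T : Type) (R : rcfType) (D : T -> Prop) (f : T -> R) x :
  unique_argmin D f -> is_argmin D f x -> forall y, is_argmin D f y <-> y = x.
Proof.
move=> [z [Hz U]] Hx y; split => [Hy|->] //.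
by rewrite (U _ Hy) (U _ Hx).
Qed.
Lemma normal_eq (R : rcfType) m n (E W : 'M[R]_(m,n)) :
  (forall t, ip E E <= ip (E + t *: W) (E + t *: W)) -> ip E W = 0.
Proof.
move=> H.
set a := ip E W; set b := ip W W.
have hb : 0 <= b by apply: ip_ge0.
have key : forall t, 0 <= 2 * t * a + t ^+ 2 * b.
  move=> t; have := H t.
  rewrite ipDl !ipDr !ipZl !ipZr (ipC W E) -/a -/b.
  have -> : ip E E + t * a + (t * a + t * (t * b)) = ip E E + (2 * t * a + t ^+ 2 * b) by ring.
  by rewrite lerDl.


set u := a / (b + 1).
have hb1 : 0 < b + 1 by rewrite ltr_wpDl.
have hu : u * (b + 1) = a by rewrite /u divfK // gt_eqF.
have := key (- u).
have -> : 2 * - u * a + (- u) ^+ 2 * b = - (u ^+ 2 * (b + 2)) by rewrite -hu; ring.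
rewrite oppr_ge0 pmulr_lle0; last by rewrite ltr_wpDl.
move=> h2.
have u0 : u = 0 by apply/eqP; rewrite -sqrf_eq0 eq_le h2 sqr_ge0.
by rewrite -hu u0 mul0r.
Qed.
Theorem theorem1 (R : rcfType) (n1 n2 k p : nat)
  (M1 : 'M[R]_n1) (M2 : 'M[R]_n2)
  (Phi1 : 'M[R]_(n1, k)) (Phi2 : 'M[R]_(n2, k))
  (F1 : 'M[R]_(n1, p)) (F2 : 'M[R]_(n2, p))
  (Copt : 'M[R]_k) :
  spd M1 -> spd M2 ->
  Phi1^T *m M1 *m Phi1 = 1%:M ->
  Phi2^T *m M2 *m Phi2 = 1%:M ->
  complete Phi1 M1 F1 -> complete Phi2 M2 F2 ->
  let A1 := pinvA Phi1 M1 *m F1 in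
  let A2 := pinvA Phi2 M2 *m F2 in
  (* Copt is the (unique) global minimizer of ||C A1 - A2|| *)
  is_argmin (fun _ => True) (fun C : 'M[R]_k => frob (C *m A1 - A2)) Copt ->
  unique_argmin (fun _ => True) (fun C : 'M[R]_k => frob (C *m A1 - A2)) ->
  (* the point-to-point problems have unique minimizers *)
  unique_argmin (@is_p2p R n2 n1) (fun P => frob (P *m F1 - F2)) ->
  unique_argmin (@is_p2p R n2 n1) (fun P => frob (P *m Phi1 - Phi2 *m Copt)) ->
  (* (1) *)
  (forall P : 'M[R]_(n2, n1), is_p2p P -> P *m F1 = F2 ->
     let C12 := pinvA Phi2 M2 *m P *m Phi1 in
     [/\ basis_aligning Phi1 Phi2 C12,
         C12 = Copt &
         forall P' : 'M[R]_(n2, n1),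
           is_argmin (@is_p2p R n2 n1) (fun Q => frob (Q *m Phi1 - Phi2 *m Copt)) P'
           <-> is_argmin (@is_p2p R n2 n1) (fun Q => frob (Q *m F1 - F2)) P'])
  /\
  (* (2) *)
  (basis_aligning Phi1 Phi2 Copt ->
     forall P' : 'M[R]_(n2, n1),
       is_argmin (@is_p2p R n2 n1) (fun Q => frob (Q *m F1 - F2)) P'
       <-> is_argmin (@is_p2p R n2 n1) (fun Q => frob (Q *m Phi1 - Phi2 *m Copt)) P').
Proof.
move=> _ _ _ O2 c1 c2 A1 A2 Hopt UC U1 U2.
have eF1 : F1 = Phi1 *m A1 by [].
have eF2 : F2 = Phi2 *m A2 by [].
set E := Copt *m A1 - A2.
have NE : E *m A1^T = 0.
  apply: ip_eq0.
  have h : ip E ((E *m A1^T) *m A1) = 0.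
    apply: normal_eq => t; rewrite -frob_le.

    have -> : E + t *: (E *m A1^T *m A1) = (Copt + t *: (E *m A1^T)) *m A1 - A2.
      by rewrite [in RHS]mulmxDl -scalemxAl addrAC.
    case: Hopt => _ HH; exact: (HH _ I).
  by move: h; rewrite /ip trmx_mul mulmxA.
have Cuniq : forall C, (forall D, frob (C *m A1 - A2) <= frob (D *m A1 - A2)) -> C = Copt.
  by move=> C hC; apply/(uniq_iff UC Hopt); split => // D _.
have rank : forall G : 'M[R]_(n2, k), G *m A1 = 0 -> G = 0.
  move=> G hG; apply/matrixP => i b; rewrite mxE.
  pose D : 'M[R]_k := \matrix_(a, c) G i c.
  have hD : D *m A1 = 0.
    apply/matrixP => a c.
    transitivity ((G *m A1) i c); last by rewrite hG !mxE.
    by rewrite !mxE; apply: eq_bigr => l _; rewrite mxE.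
  have : Copt + D = Copt.
    apply: Cuniq; rewrite mulmxDl addrAC hD addr0.
    by case: Hopt => _ HH D0; exact: (HH D0 I).
  move/(congr1 (fun M : 'M[R]_k => M b b)); rewrite !mxE => h.
  by apply: (addrI (Copt b b)); rewrite h addr0.
have cross : forall X : 'M[R]_(n2, k), ip (X *m A1) (Phi2 *m E) = 0.
  move=> X; rewrite /ip trmx_mul -mulmxA (mulmxA A1).
  have -> : A1 *m E^T = (E *m A1^T)^T by rewrite trmx_mul trmxK.
  by rewrite NE trmx0 mul0mx mulmx0 mxtrace0.
split.
  move=> P HP hPF C12.
  have hC12 : C12 *m A1 = A2.
    by rewrite /C12 -mulmxA -eF1 -mulmxA hPF.
  have eC : C12 = Copt.
    by apply: Cuniq => D; rewrite hC12 subrr frob0 frob_ge0.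
  have BA : Phi2 *m Copt = P *m Phi1.
    apply/eqP; rewrite eq_sym -subr_eq0; apply/eqP; apply: rank.
    by rewrite mulmxBl -!mulmxA -eC hC12 -eF1 hPF -eF2 subrr.
  have m1 : is_argmin (@is_p2p R n2 n1) (fun Q => frob (Q *m Phi1 - Phi2 *m Copt)) P.
    by split => // Q _; rewrite BA subrr frob0 frob_ge0.
  have m2 : is_argmin (@is_p2p R n2 n1) (fun Q => frob (Q *m F1 - F2)) P.
    by split => // Q _; rewrite hPF subrr frob0 frob_ge0.
  split => //.
    by exists P; split => //; rewrite eC BA.
  move=> P'; split.
    by move/(uniq_iff U2 m1) => ->.
  by move/(uniq_iff U1 m2) => ->.
move=> [P0 [HP0 BA]] P'.
have m1 : is_argmin (@is_p2p R n2 n1) (fun Q => frob (Q *m Phi1 - Phi2 *m Copt)) P0.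
  by split => // Q _; rewrite BA subrr frob0 frob_ge0.
have m2 : is_argmin (@is_p2p R n2 n1) (fun Q => frob (Q *m F1 - F2)) P0.
  split => // Q _; rewrite frob_le.
  have e0 : P0 *m F1 - F2 = Phi2 *m E.
    by rewrite /E mulmxBr mulmxA BA -mulmxA -eF1 -eF2.
  have eQ : Q *m F1 - F2 = (Q *m Phi1 - Phi2 *m Copt) *m A1 + Phi2 *m E.
    have hP0 : P0 *m F1 = Phi2 *m (Copt *m A1) by rewrite eF1 mulmxA -BA mulmxA.
    by rewrite -e0 mulmxBl -!mulmxA -eF1 hP0 addrA subrK.
  rewrite e0 eQ ipDl !ipDr cross ipC cross add0r addr0.
  by rewrite lerDr ip_ge0.
split.
  by move/(uniq_iff U1 m2) => ->.
by move/(uniq_iff U2 m1) => ->.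
Qed.
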